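(* Let $(\mathbf X_i)_{i\in\mathbb N}$ be $\mathbb R^d$-valued random vectors, $\mathcal P=(\mathbf x_1,\dots,\mathbf x_p)$ points of $\mathbb R^d$, and $\mathbf Y_i=(\mathbf 1(\mathbf X_i\le\mathbf x_1),\dots,\mathbf 1(\mathbf X_i\le\mathbf x_p))$. For integers $m\ge1$ and $k\ge m+1$ and $\mathbf x\in\mathbb R^d$ let $$E_m^{\mathbf x}(k)=\max_{j\in\{m,\dots,k-1\}}\frac{j(k-j)}{m^{3/2}}|F_{1:j}(\mathbf x)-F_{j+1:k}(\mathbf x)|,\qquad D_m(k)=\max_{j\in\{m,\dots,k-1\}}\frac{j(k-j)}{m^{3/2}}\|\bar{\mathbf Y}_{1:j}-\bar{\mathbf Y}_{j+1:k}\|_{\Sigma_m^{-1}},$$ where $\Sigma_m$ are $p\times p$ random matrices that are positive definite almost surely for all $m\in\mathbb N$, and $\Sigma_m\to\Sigma$ in probability for some positive-definite matrix $\Sigma$. Let $\eta>0$ and assume that for some $\ell\in\{1,\dots,p\}$, $\sup_{k>m}(m/k)^{\frac32+\eta}E_m^{\mathbf x_\ell}(k)\to\infty$ in probability as $m\to\infty$. Then $\sup_{k>m}(m/k)^{\frac32+\eta}D_m(k)\to\infty$ in probability as $m\to\infty$.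
   Context: Inequalities between vectors are componentwise. For integers $j,k\ge1$, $F_{j:k}(\mathbf x)=\frac1{k-j+1}\sum_{i=j}^k\mathbf 1(\mathbf X_i\le\mathbf x)$ if $j\le k$ and $0$ otherwise; $\bar{\mathbf Y}_{j:k}=\frac1{k-j+1}\sum_{i=j}^k\mathbf Y_i$. For $M$ positive definite, $\|\mathbf y\|_M=\sqrt{(\mathbf y^\top M\mathbf y)/p}$. *)

(* Defs.v *)
From HB Require Import structures.
From mathcomp Require Import all_boot all_order all_algebra.
From mathcomp Require Import all_classical all_reals all_analysis.
Set Implicit Arguments. Unset Strict Implicit. Unset Printing Implicit Defensive.
Import Order.TTheory GRing.Theory Num.Theory.
Import numFieldNormedType.Exports.
Local Open Scope classical_set_scope.
Local Open Scope ring_scope.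

Definition indle {R : realType} {d : nat} (v x : 'rV[R]_d) : R :=
  if [forall t : 'I_d, v ord0 t <= x ord0 t] then 1 else 0.

Definition Fjk {R : realType} {T : Type} {d : nat}
  (X : nat -> T -> 'rV[R]_d) (j k : nat) (x : 'rV[R]_d) (w : T) : R :=
  if (j <= k)%N then (k - j + 1)%:R^-1 * \sum_(j <= i < k.+1) indle (X i w) x
  else 0.

Definition Yvec {R : realType} {T : Type} {d p : nat}
  (X : nat -> T -> 'rV[R]_d) (pts : 'I_p -> 'rV[R]_d) (i : nat) (w : T) : 'rV[R]_p :=
  \row_(l < p) indle (X i w) (pts l).

Definition Ybar {R : realType} {T : Type} {d p : nat}
  (X : nat -> T -> 'rV[R]_d) (pts : 'I_p -> 'rV[R]_d) (j k : nat) (w : T) : 'rV[R]_p :=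
  if (j <= k)%N then (k - j + 1)%:R^-1 *: \sum_(j <= i < k.+1) Yvec X pts i w
  else 0.

Definition Mnorm {R : realType} {p : nat} (M : 'M[R]_p) (y : 'rV[R]_p) : R :=
  Num.sqrt ((y *m M *m y^T) ord0 ord0 / p%:R).

Definition posdef {R : realType} {p : nat} (M : 'M[R]_p) : Prop :=
  M^T = M /\ forall v : 'rV[R]_p, v != 0 -> 0 < (v *m M *m v^T) ord0 ord0.

Definition Estat {R : realType} {T : Type} {d : nat}
  (X : nat -> T -> 'rV[R]_d) (m : nat) (x : 'rV[R]_d) (k : nat) (w : T) : R :=
  \big[Num.max/0]_(m <= j < k)
    ((j * (k - j))%:R / (m%:R `^ (3/2)) * `|Fjk X 1 j x w - Fjk X j.+1 k x w|).

Definition Dstat {R : realType} {T : Type} {d p : nat}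
  (X : nat -> T -> 'rV[R]_d) (pts : 'I_p -> 'rV[R]_d) (Sig : nat -> T -> 'M[R]_p)
  (m k : nat) (w : T) : R :=
  \big[Num.max/0]_(m <= j < k)
    ((j * (k - j))%:R / (m%:R `^ (3/2)) *
      Mnorm (invmx (Sig m w)) (Ybar X pts 1 j w - Ybar X pts j.+1 k w)).

Definition weighted_sup {R : realType} {T : Type} (eta : R) (m : nat)
  (S : nat -> T -> R) (w : T) : \bar R :=
  ereal_sup [set ((m%:R / k%:R) `^ (3/2 + eta) * S k w)%:E | k in [set k : nat | (m < k)%N]].

Definition to_infty_in_prob {dT : measure_display} {T : measurableType dT} {R : realType}
  (P : probability T R) (Z : nat -> T -> \bar R) : Prop :=
  forall M : R, (fun m => P [set w | (Z m w <= M%:E)%E]) @ \oo --> 0%E.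

Definition mx_cvg_in_prob {dT : measure_display} {T : measurableType dT} {R : realType}
  {p : nat} (P : probability T R) (Sig : nat -> T -> 'M[R]_p) (Sig0 : 'M[R]_p) : Prop :=
  forall (eps : R), 0 < eps -> forall i j : 'I_p,
    (fun m => P [set w | eps < `|Sig m w i j - Sig0 i j|]) @ \oo --> 0%E.

(* Main.v *)
Require Import Defs.
From HB Require Import structures.
From mathcomp Require Import all_boot all_order all_algebra.
From mathcomp Require Import all_classical all_reals all_analysis.
From mathcomp Require Import ring lra.
From mathcomp Require Import measurable_realfun.
Import Order.TTheory GRing.Theory Num.Theory.
Local Open Scope classical_set_scope.
Local Open Scope ring_scope.

Section Alg.
Variable R : realType.
Variable p : nat.
Implicit Types (S : 'M[R]_p) (a b z : 'rV[R]_p).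

Definition Bf S a b := (a *m S *m b^T) ord0 ord0.

Lemma tr00 (M : 'M[R]_1) : M ord0 ord0 = M^T ord0 ord0.
Proof. by rewrite mxE. Qed.

Lemma Bf_sym S a b : S^T = S -> Bf S a b = Bf S b a.
Proof.
by move=> hS; rewrite /Bf tr00 !trmx_mul trmxK hS mulmxA.
Qed.

Lemma Bf_lin S s t a b :
  S^T = S -> Bf S (s *: a + t *: b) (s *: a + t *: b) =
  s^+2 * Bf S a a + 2 * s * t * Bf S a b + t^+2 * Bf S b b.
Proof.
move=> hS; rewrite /Bf linearD /= !linearZ /= !mulmxDl !mulmxDr.
rewrite -!scalemxAl -!scalemxAr.
have sE (k : R) (M : 'M[R]_1) : (k *: M) ord0 ord0 = k * M ord0 ord0 by rewrite mxE.
have dE (M N : 'M[R]_1) : (M + N) ord0 ord0 = M ord0 ord0 + N ord0 ord0 by rewrite mxE.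
rewrite !dE !sE.
have := Bf_sym S b a hS; rewrite /Bf => ->.
ring.
Qed.

Lemma cs_posdef S z b : posdef S -> (Bf S z b)^+2 <= Bf S z z * Bf S b b.
Proof.
move=> [hS hpd].
have psd : forall v, 0 <= Bf S v v.
  move=> v; have [->|v0] := eqVneq v 0; last exact/ltW/hpd.
  by rewrite /Bf mul0mx mul0mx mxE.
have [b0|bn0] := eqVneq b 0.
  by rewrite b0 /Bf !(mul0mx, mulmx0, trmx0) mxE expr0n /= mulr0.
have hb := hpd _ bn0.
have := psd (Bf S b b *: z + (- Bf S z b) *: b).
rewrite Bf_lin //.
set c := Bf S b b; set x := Bf S z b; set y := Bf S z z.
move: hb; rewrite -/c => hb h.
have : 0 <= c * (c * y - x ^+ 2).
  have -> : c * (c * y - x ^+ 2) = c ^+ 2 * y + 2 * c * - x * x + (- x) ^+ 2 * c by ring.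
  exact: h.
by rewrite pmulr_rge0 // subr_ge0 mulrC.
Qed.


Lemma pd_unit S : posdef S -> S \in unitmx.
Proof.
move=> [_ hpd]; rewrite unitmxE unitfE; apply/negP => /det0P [v v0 vS].
by have := hpd v v0; rewrite vS mul0mx mxE ltxx.
Qed.

Lemma Bf_delta_r S z (l : 'I_p) : Bf S z (delta_mx ord0 l) = (z *m S) ord0 l.
Proof. by rewrite /Bf trmx_delta -colE mxE. Qed.

Lemma Bf_delta S (l : 'I_p) : Bf S (delta_mx ord0 l) (delta_mx ord0 l) = S l l.
Proof. by rewrite /Bf trmx_delta -colE -rowE !mxE. Qed.

Lemma Mnorm_bound S (y : 'rV[R]_p) (l : 'I_p) B0 : posdef S -> S l l <= B0 ->
  `|y ord0 l| <= Num.sqrt (B0 * p%:R) * Mnorm (invmx S) y.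
Proof.
move=> hpd hB.
have p0 : (0 < p)%N by apply: leq_ltn_trans (ltn_ord l).
have [z ->] : exists z, y = z *m S.
  by exists (y *m invmx S); rewrite -mulmxA mulVmx ?mulmx1 // pd_unit.
have dn0 : delta_mx ord0 l != 0 :> 'rV[R]_p.
  apply/eqP => /(congr1 (fun M : 'rV[R]_p => M ord0 l)).
  by rewrite !mxE !eqxx /=; apply/eqP; rewrite oner_eq0.
have hc := hpd.2 _ dn0; rewrite -/(Bf S _ _) Bf_delta in hc.
have cs := @cs_posdef S z (delta_mx ord0 l) hpd.
rewrite Bf_delta Bf_delta_r in cs.
have hq : ((z *m S) *m invmx S *m (z *m S)^T) ord0 ord0 = Bf S z z.
  by rewrite mulmxK ?pd_unit // trmx_mul hpd.1 mulmxA.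
rewrite /Mnorm hq.
have Q0 : 0 <= Bf S z z.
  have [->|v0] := eqVneq z 0; last exact/ltW/hpd.2.
  by rewrite /Bf mul0mx mul0mx mxE.
have B00 : 0 <= B0 by apply: le_trans hB; apply: ltW; apply: hc.
rewrite -sqrtrM ?mulr_ge0 //.
have pn0 : p%:R != 0 :> R by rewrite pnatr_eq0 -lt0n.
have -> : B0 * p%:R * (Bf S z z / p%:R) = Bf S z z * B0 by field.
rewrite -sqrtr_sqr ler_wsqrtr // (le_trans cs) // ler_wpM2l //.
Qed.

End Alg.

Section Cmp.
Variables (R : realType) (T : Type) (d p : nat).
Variables (X : nat -> T -> 'rV[R]_d) (pts : 'I_p -> 'rV[R]_d) (Sig : nat -> T -> 'M[R]_p).

Lemma Ybar_entry j k w a : (Ybar X pts j k w) ord0 a = Fjk X j k (pts a) w.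
Proof.
rewrite /Ybar /Fjk; case: ifP => _; last by rewrite mxE.
rewrite mxE summxE; congr (_ * _); apply: eq_bigr => i _; rewrite mxE //.
Qed.

Lemma E_le_D (l : 'I_p) B0 m k w : posdef (Sig m w) -> Sig m w l l <= B0 ->
  Estat X m (pts l) k w <= Num.sqrt (B0 * p%:R) * Dstat X pts Sig m k w.
Proof.
move=> hpd hB; rewrite /Estat /Dstat.
set s := Num.sqrt _.
have s0 : 0 <= s by apply: sqrtr_ge0.
elim/big_rec2: _ => [|j y1 y2 _ h]; first by rewrite mulr0.
rewrite ge_max; apply/andP; split.
  set Dj := (_ * Mnorm _ _).
  apply: (@le_trans _ _ (s * Dj)); last by rewrite ler_wpM2l // le_max lexx.
  rewrite /Dj mulrCA ler_wpM2l ?mulr_ge0 ?invr_ge0 ?powR_ge0 //.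
  have := @Mnorm_bound _ _ _ (Ybar X pts 1 j w - Ybar X pts j.+1 k w) l B0 hpd hB.
  by rewrite !mxE !Ybar_entry.
by rewrite (le_trans h) // ler_wpM2l // le_max lexx orbT.
Qed.

End Cmp.

Lemma meas_inv (R : realType) : measurable_fun [set: R] (@GRing.inv R).
Proof.
rewrite -(setUv [set (0:R)]).
apply/measurable_funU => //; first exact: measurableC.
split; first exact: measurable_fun_set1.
apply: open_continuous_measurable_fun.
  by rewrite openC; apply: closed_eq.
move=> x; rewrite inE /= => x0; apply: inv_continuous; exact/eqP.
Qed.

Section Meas.
Context (dT : measure_display) (T : measurableType dT) (R : realType).

Definition mmeas {m n} (A : T -> 'M[R]_(m, n)) :=
  forall i j, measurable_fun setT (fun w => A w i j).

Lemma meas_le_set (f g : T -> R) : measurable_fun setT f -> measurable_fun setT g ->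
  measurable [set w | f w <= g w].
Proof.
move=> hf hg; rewrite -[X in measurable X]setTI.
exact: (measurable_fun_ler hf hg) measurableT [set true] I.
Qed.

Lemma meas_lt_set (f g : T -> R) : measurable_fun setT f -> measurable_fun setT g ->
  measurable [set w | f w < g w].
Proof.
move=> hf hg; rewrite -[X in measurable X]setTI.
exact: (measurable_fun_ltr hf hg) measurableT [set true] I.
Qed.

Lemma mmeas_mul m n q (A : T -> 'M[R]_(m, n)) (B : T -> 'M[R]_(n, q)) :
  mmeas A -> mmeas B -> mmeas (fun w => A w *m B w).
Proof.
move=> hA hB i j.
rewrite (_ : (fun w => _) = fun w => \sum_k A w i k * B w k j); last first.
  by apply/funext => w; rewrite mxE.
apply: measurable_sum => k; exact: measurable_funM.
Qed.

Lemma mmeas_tr m n (A : T -> 'M[R]_(m, n)) : mmeas A -> mmeas (fun w => (A w)^T).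
Proof.
move=> hA i j; rewrite (_ : (fun w => _) = fun w => A w j i) //.
by apply/funext => w; rewrite mxE.
Qed.

Lemma meas_det n (A : T -> 'M[R]_n) : mmeas A ->
  measurable_fun setT (fun w => \det (A w)).
Proof.
move=> hA; apply: measurable_sum => s; apply: measurable_funM.
  exact: measurable_cst.
by apply: measurable_prod => i _; exact: hA.
Qed.

Lemma mmeas_adj n (A : T -> 'M[R]_n) : mmeas A -> mmeas (fun w => \adj (A w)).
Proof.
case: n A => [|n] A hA i j; first by case: i.
rewrite (_ : (fun w => _) = fun w =>
   (-1) ^+ (j + i) * \det (row' j (col' i (A w)))); last first.
  by apply/funext => w; rewrite mxE /cofactor.
apply: measurable_funM; first exact: measurable_cst.
apply: meas_det => a b.
rewrite (_ : (fun w => _) = fun w => A w (lift j a) (lift i b)) //.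
by apply/funext => w; rewrite !mxE.
Qed.

Lemma mmeas_inv n (A : T -> 'M[R]_n) : mmeas A -> mmeas (fun w => invmx (A w)).
Proof.
move=> hA i j.
rewrite (_ : (fun w => _) = fun w => if \det (A w) == 0 then A w i j
   else (\det (A w))^-1 * \adj (A w) i j); last first.
  apply/funext => w; rewrite /invmx unitmxE unitfE.
  by case: eqP => _ /=; rewrite ?mxE.
apply: measurable_fun_ifT => //.
- apply: measurable_fun_eqr; [exact: meas_det | exact: measurable_cst].
- apply: measurable_funM; last exact: mmeas_adj.
  apply: measurableT_comp; [exact: meas_inv | exact: meas_det].
Qed.

Lemma meas_Mnorm p (M : T -> 'M[R]_p) (y : T -> 'rV[R]_p) :
  mmeas M -> mmeas y -> measurable_fun setT (fun w => Mnorm (M w) (y w)).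
Proof.
move=> hM hy; rewrite /Mnorm.
apply: measurableT_comp; first exact: continuous_measurable_fun (@sqrt_continuous R).
apply: measurable_funM; last exact: measurable_cst.
apply: mmeas_mul; first exact: mmeas_mul.
exact: mmeas_tr.
Qed.

Lemma meas_bigmax (r : seq nat) (F : nat -> T -> R) :
  (forall j, measurable_fun setT (F j)) ->
  measurable_fun setT (fun w => \big[Num.max/0]_(j <- r) F j w).
Proof.
move=> hF; elim: r => [|a r IH].
  by under eq_fun do rewrite big_nil; exact: measurable_cst.
under eq_fun do rewrite big_cons.
exact: measurable_maxr.
Qed.

Variables (d p : nat) (X : nat -> T -> 'rV[R]_d) (pts : 'I_p -> 'rV[R]_d)
  (Sig : nat -> T -> 'M[R]_p).
Hypothesis hX : forall (i : nat) (t : 'I_d), measurable_fun setT (fun w => X i w ord0 t).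
Hypothesis hS : forall (m : nat) (i j : 'I_p), measurable_fun setT (fun w => Sig m w i j).

Lemma meas_indle i x : measurable_fun setT (fun w => indle (X i w) x).
Proof.
rewrite (_ : (fun w => _) = fun w => \prod_(t < d) (if X i w ord0 t <= x ord0 t then 1 else 0)).
  apply: measurable_prod => t _; apply: measurable_fun_ifT.
  - apply: measurable_fun_ler => //; exact: measurable_cst.
  - exact: measurable_cst.
  - exact: measurable_cst.
apply/funext => w; rewrite /indle; case: ifP.
  by move/forallP => h; rewrite big1 // => t _; rewrite (h t).
move/negbT; rewrite negb_forall => /existsP [t ht].
by rewrite (bigD1 t) //= (negbTE ht) mul0r.
Qed.

Lemma meas_Fjk j k x : measurable_fun setT (Fjk X j k x).
Proof.
rewrite /Fjk; case: (j <= k)%N; last exact: measurable_cst.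
apply: measurable_funM; first exact: measurable_cst.
apply: measurable_sum => i; exact: meas_indle.
Qed.

Lemma meas_Estat m x k : measurable_fun setT (Estat X m x k).
Proof.
apply: meas_bigmax => j; apply: measurable_funM; first exact: measurable_cst.
apply: measurableT_comp => //; apply: measurable_funB; exact: meas_Fjk.
Qed.

Lemma meas_Dstat m k : measurable_fun setT (Dstat X pts Sig m k).
Proof.
apply: meas_bigmax => j; apply: measurable_funM; first exact: measurable_cst.
apply: meas_Mnorm; first by apply: mmeas_inv => a b; exact: hS.
move=> a b; rewrite (_ : (fun w => _) = fun w =>
  Fjk X 1 j (pts b) w - Fjk X j.+1 k (pts b) w).
  apply: measurable_funB; exact: meas_Fjk.
by apply/funext => w; rewrite !mxE (ord1 a) !Ybar_entry.
Qed.

End Meas.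

Lemma meas_wsup (dT : measure_display) (T : measurableType dT) (R : realType)
  (eta : R) m (S : nat -> T -> R) (M : R) :
  (forall k, measurable_fun setT (S k)) ->
  measurable [set w | (weighted_sup eta m S w <= M%:E)%E].
Proof.
move=> hS.
have -> : [set w | (weighted_sup eta m S w <= M%:E)%E] =
  \bigcap_k [set w | (m < k)%N -> (m%:R / k%:R) `^ (3/2 + eta) * S k w <= M].
  apply/seteqP; split => w /=.
  - move=> h k _ mk; rewrite -lee_fin; apply: le_trans h.
    by apply: ereal_sup_ubound; exists k.
  - move=> h; apply: ge_ereal_sup => _ [k mk <-]; rewrite lee_fin; exact: h k I mk.
apply: bigcapT_measurable => k; case: (ltnP m k) => mk.
  rewrite (_ : [set w | _] = [set w | (m%:R / k%:R) `^ (3/2 + eta) * S k w <= M]).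
    apply: meas_le_set; last exact: measurable_cst.
    apply: measurable_funM => //; exact: measurable_cst.
  by apply/seteqP; split => w /=; [apply | move=> h _].
rewrite (_ : [set w | _] = setT) //.
by apply/seteqP; split => w //= _; rewrite ltnNge mk.
Qed.

Theorem proposition2p4 (dT : measure_display) (T : measurableType dT) (R : realType)
  (P : probability T R) (d p : nat)
  (X : nat -> T -> 'rV[R]_d) (pts : 'I_p -> 'rV[R]_d)
  (Sig : nat -> T -> 'M[R]_p) (Sig0 : 'M[R]_p) (eta : R) (l : 'I_p) :
  (forall (i : nat) (t : 'I_d), measurable_fun setT (fun w => X i w ord0 t)) ->
  (forall (m : nat) (i j : 'I_p), measurable_fun setT (fun w => Sig m w i j)) ->
  (forall m : nat, (0 < m)%N -> {ae P, forall w, posdef (Sig m w)}) ->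
  posdef Sig0 ->
  mx_cvg_in_prob P Sig Sig0 ->
  0 < eta ->
  to_infty_in_prob P (fun m => weighted_sup eta m (Estat X m (pts l))) ->
  to_infty_in_prob P (fun m => weighted_sup eta m (Dstat X pts Sig m)).
Proof.
move=> hX hS hpd hpd0 hcvg eta0 hE M.
set l0 := Sig0 l l.
have c0 : 0 < l0.
  have dn0 : delta_mx ord0 l != 0 :> 'rV[R]_p.
    apply/eqP => /(congr1 (fun M : 'rV[R]_p => M ord0 l)).
    by rewrite !mxE !eqxx /=; apply/eqP; rewrite oner_eq0.
  by have := hpd0.2 _ dn0; rewrite -/(@Bf R p Sig0 _ _) Bf_delta.
set B0 := 2 * l0.
set s := Num.sqrt (B0 * p%:R).
have s0 : 0 <= s by apply: sqrtr_ge0.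
set Am := fun m => [set w | (weighted_sup eta m (Dstat X pts Sig m) w <= M%:E)%E].
set Bm := fun m => [set w | (weighted_sup eta m (Estat X m (pts l)) w <= (s * M)%:E)%E].
set Cm := fun m => [set w | l0 < `|Sig m w l l - l0|].
have mA m : measurable (Am m) by apply: meas_wsup => k; exact: meas_Dstat.
have mB m : measurable (Bm m) by apply: meas_wsup => k; exact: meas_Estat.
have mC m : measurable (Cm m).
  apply: meas_lt_set; first exact: measurable_cst.
  apply: measurableT_comp => //; apply: measurable_funB => //; exact: measurable_cst.
have hB := hE (s * M).
have hC := hcvg l0 c0 l l.
apply: (@squeeze_cvge _ _ _ _ (fun _ => 0%E) _ (fun m => P (Bm m) + P (Cm m))%E).
- near=> m.
  have m0 : (0 < m)%N by near: m; exists 1%N.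
  apply/andP; split; first exact: measure_ge0.
  have [N [mN PN0 sub]] := hpd m m0.
  have incl : Am m `<=` Bm m `|` N `|` Cm m.
    move=> w hw.
    have [wC|wC] := pselect (Cm m w); first by right.
    have [wN|wN] := pselect (N w); first by left; right.
    left; left.
    have pdw : posdef (Sig m w).
      apply: contrapT => npd; apply: wN; exact: sub.
    have hle : Sig m w l l <= B0.
      move/negP: wC; rewrite -leNgt => h.
      rewrite /B0; move: (le_trans (ler_norm _) h); lra.
    rewrite /Bm /=; apply: ge_ereal_sup => _ [k mk <-]; rewrite lee_fin.
    have hk : ((m%:R / k%:R) `^ (3/2 + eta) * Dstat X pts Sig m k w <= M)%R.
      rewrite -lee_fin; apply: le_trans hw.
      by apply: ereal_sup_ubound; exists k.
    apply: (@le_trans _ _ (s * ((m%:R / k%:R) `^ (3/2 + eta) * Dstat X pts Sig m k w))); last first.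
      exact: ler_wpM2l.
    rewrite mulrCA ler_wpM2l ?powR_ge0 //.
    exact: E_le_D.
  apply: (le_trans (le_measure _ (mem_set (mA m)) _ incl)).
    by rewrite inE; apply: measurableU => //; apply: measurableU.
  apply: (le_trans (measureU2 _ _ _)) => //; first by apply: measurableU.
  rewrite leeD2r //.
  apply: (le_trans (measureU2 _ _ _)) => //.
  rewrite [X in (_ + X <= _)%E](_ : _ = 0%E); last exact: PN0.
  by rewrite adde0.
- exact: cvg_cst.
- rewrite -[0%E](adde0 0); apply: cvgeD => //.
Unshelve. all: end_near.
Qed.
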